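(* (i) $(\mathcal{N},=,\sim_V)\models\forall\mathsf{x}\forall\mathsf{y}[\mathsf{x}\sim\mathsf{y}\rightarrow(\mathsf{x}=\mathsf{y}\vee\neg(\mathsf{x}=\mathsf{y}))]$, i.e. $\forall\alpha\forall\beta[\alpha\sim_V\beta\rightarrow(\alpha=\beta\vee\neg(\alpha=\beta))]$. (ii) $(\mathcal{N},=,\sim^\omega_V)\models\forall\mathsf{x}\,\neg\forall\mathsf{y}[\mathsf{x}\sim\mathsf{y}\rightarrow(\mathsf{x}=\mathsf{y}\vee\neg(\mathsf{x}=\mathsf{y}))]$, i.e. for every $\gamma$ it is not the case that $\forall\alpha[\gamma\sim^\omega_V\alpha\rightarrow(\gamma=\alpha\vee\neg(\gamma=\alpha))]$.
   Context: Intuitionistic mathematics (constructive reading of logical constants; Markov's Principle not assumed), with Brouwer's Continuity Principle as an axiom (for every $R\subseteq\mathcal{N}\times\omega$, if $\forall\alpha\exists n[\alpha Rn]$ then $\forall\alpha\exists m\exists n\forall\beta[\overline{\alpha}m\sqsubset\beta\rightarrow\beta Rn]$, where $\overline{\alpha}m=\langle\alpha(0),\dots,\alpha(m-1)\rangle$ and $\sqsubset$ is ''initial segment of''). $\mathcal{N}=\omega^\omega$, $=$ is equality of sequences. The first-order language has binary relation symbols $=$ (interpreted as equality) and $\sim$ (interpreted by the third component of the structure). $\alpha\sim^0_V\beta$ (also written $\alpha\sim_V\beta$) iff $\exists n\forall m>n[\alpha(m)=\beta(m)]$; $\alpha\sim^{i+1}_V\beta$ iff $\exists n\forall m>n[\alpha(m)\neq\beta(m)\rightarrow\alpha\sim^i_V\beta]$;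 $\alpha\sim^\omega_V\beta$ iff $\exists i[\alpha\sim^i_V\beta]$. *)

(* Defs.v *)
From Stdlib Require Import Arith.

Definition Baire := nat -> nat.

Definition seq_eq (a b : Baire) : Prop := forall n, a n = b n.

Definition agree_upto (a : Baire) (m : nat) (b : Baire) : Prop :=
  forall k, k < m -> a k = b k.

Fixpoint simV (i : nat) (a b : Baire) : Prop :=
  match i with
  | 0 => exists n, forall m, n < m -> a m = b m
  | S j => exists n, forall m, n < m -> a m <> b m -> simV j a b
  end.

Definition simV_omega (a b : Baire) : Prop := exists i, simV i a b.

Definition BCP : Prop :=
  forall R : Baire -> nat -> Prop,
    (forall a, exists n, R a n) ->
    forall a, exists m, exists n, forall b, agree_upto a m b -> R b n.

(* Main.v *)
Require Import Defs.
From Stdlib Require Import Arith Lia Bool.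

Lemma dec_upto (a b : Baire) : forall n,
  (forall k, k < n -> a k = b k) \/ ~ (forall k, k < n -> a k = b k).
Proof.
  induction n as [|n IH].
  - left; intros; lia.
  - destruct IH as [H|H].
    + destruct (Nat.eq_dec (a n) (b n)) as [E|E].
      * left; intros k Hk. destruct (Nat.eq_dec k n); [subst; auto| apply H; lia].
      * right; intro H'. apply E, H'. lia.
    + right; intro H'. apply H; intros; apply H'; lia.
Qed.

Fixpoint z (al : Baire) (m : nat) : bool :=
  match m with 0 => true | S m' => z al m' && Nat.eqb (al m') 0 end.

Lemma z_true al m : z al m = true -> forall k, k < m -> al k = 0.
Proof.
  induction m as [|m IH]; simpl; intros H k Hk; [lia|].
  apply andb_true_iff in H as [H1 H2]. apply Nat.eqb_eq in H2.
  destruct (Nat.eq_dec k m); [subst; auto| apply IH; auto; lia].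
Qed.

Lemma true_z al m : (forall k, k < m -> al k = 0) -> z al m = true.
Proof.
  induction m as [|m IH]; simpl; intros H; auto.
  rewrite IH by (intros; apply H; lia). rewrite (H m) by lia. reflexivity.
Qed.

Definition pt al m := z al m && negb (Nat.eqb (al m) 0).
Definition aa (g al : Baire) : Baire := fun m => if pt al m then S (g m) else g m.

Lemma pt_uniq al m m' : pt al m = true -> m < m' -> pt al m' = false.
Proof.
  unfold pt; intros H Hlt.
  apply andb_true_iff in H as [_ H]. apply negb_true_iff, Nat.eqb_neq in H.
  destruct (z al m') eqn:E; auto.
  exfalso; apply H; exact (z_true _ _ E m Hlt).
Qed.

Lemma aa_sim g al : simV_omega g (aa g al).
Proof.
  exists 1. exists 0. intros m _ Hne. exists m. intros m' Hm'.
  unfold aa. destruct (pt al m) eqn:E.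
  - rewrite (pt_uniq _ _ _ E Hm'); auto.
  - exfalso; apply Hne; unfold aa; rewrite E; auto.
Qed.

Theorem theorem12p1 :
  BCP ->
  (forall a b : Baire, simV 0 a b -> (seq_eq a b \/ ~ seq_eq a b)) /\
  (forall g : Baire,
     ~ (forall a : Baire, simV_omega g a -> (seq_eq g a \/ ~ seq_eq g a))).
Proof.
  intros bcp; split.
  - intros a b [n Hn]. destruct (dec_upto a b (S n)) as [H|H].
    + left; intro k. destruct (le_lt_dec k n); [apply H; lia| apply Hn; lia].
    + right; intro H'; apply H; intros; apply H'.
  - intros g H.
    set (R := fun al n => (n = 0 /\ seq_eq g (aa g al)) \/ (n = 1 /\ ~ seq_eq g (aa g al))).
    assert (Hall : forall al, exists n, R al n).
    { intro al. destruct (H _ (aa_sim g al)) as [E|E]; [exists 0|exists 1]; unfold R; auto. }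
    destruct (bcp R Hall (fun _ => 0)) as [m [n Hmn]].
    set (b := fun k => if Nat.eqb k m then 1 else 0).
    assert (Rb : R b n).
    { apply Hmn. intros k Hk. unfold b. destruct (Nat.eqb_spec k m); [lia|auto]. }
    assert (R0 : R (fun _ => 0) n) by (apply Hmn; intros k _; auto).
    destruct R0 as [[-> _]|[-> E]].
    + destruct Rb as [[_ E]|[E _]]; [|discriminate].
      specialize (E m). unfold aa in E.
      assert (pt b m = true).
      { unfold pt. rewrite true_z. unfold b; rewrite Nat.eqb_refl; reflexivity.
        intros k Hk; unfold b; destruct (Nat.eqb_spec k m); [lia|auto]. }
      rewrite H0 in E. lia.
    + apply E. intro k. unfold aa, pt. simpl. rewrite andb_false_r. reflexivity.
Qed.
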